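(* Under the hypotheses of the following setting: $\{e_n\}_{n\in\mathbb{Z}}$ i.i.d. real random variables with a continuous, bounded, strictly positive density on $\mathbb{R}$; $q,d\ge1$ integers; $r,\mu_1,\mu_2,\phi_i,\psi_i\in\mathbb{R}$; and $\{y_n\}_{n\in\mathbb{Z}}$ the unique strictly stationary solution of $$y_n=\begin{cases}\mu_1+e_n+\sum_{i=1}^q\phi_ie_{n-i}, & \text{if } y_{n-d}\le r,\\ \mu_2+e_n+\sum_{i=1}^q\psi_ie_{n-i}, & \text{if } y_{n-d}>r,\end{cases}$$ there exists $\rho\in(0,1)$ such that for all $-\infty\le u_1<u_2\le\infty$ and $-\infty\le v_1<v_2\le\infty$, $$\operatorname{Cov}\big(\mathbb{1}(u_1<y_0\le u_2),\ \mathbb{1}(v_1<y_k\le v_2)\big)=O(\rho^k)\quad\text{as } k\to\infty.$$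
   Context: $\mathbb{1}(\cdot)$ denotes the indicator function. A solution means a process on the same probability space as $\{e_n\}$ satisfying the equation almost surely for every $n$. *)

(* Defs.v *)
From HB Require Import structures.
From mathcomp Require Import all_boot all_order all_algebra.
From mathcomp Require Import all_classical all_reals all_analysis.
Set Implicit Arguments. Unset Strict Implicit. Unset Printing Implicit Defensive.
Import Order.TTheory GRing.Theory Num.Theory numFieldNormedType.Exports.
Local Open Scope classical_set_scope.
Local Open Scope ring_scope.

Definition mutually_independent {d} {T : measurableType d} {R : realType}
  (P : probability T R) (X : int -> T -> R) : Prop :=
  forall (s : seq int) (A : int -> set R), uniq s ->
    (forall i, measurable (A i)) ->
    P (\bigcap_(i in [set i | i \in s]) (X i @^-1` A i)) =
    (\prod_(i <- s) P (X i @^-1` A i))%E.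

Definition identically_distributed {d} {T : measurableType d} {R : realType}
  (P : probability T R) (X : int -> T -> R) : Prop :=
  forall n (A : set R), measurable A -> P (X n @^-1` A) = P (X 0 @^-1` A).

Definition has_density {d} {T : measurableType d} {R : realType}
  (P : probability T R) (X : T -> R) (f : R -> R) : Prop :=
  forall A : set R, measurable A ->
    P (X @^-1` A) = (\int[lebesgue_measure]_(x in A) (f x)%:E)%E.

Definition strictly_stationary {d} {T : measurableType d} {R : realType}
  (P : probability T R) (Y : int -> T -> R) : Prop :=
  forall (h : int) (s : seq int) (A : int -> set R),
    (forall i, measurable (A i)) ->
    P (\bigcap_(t in [set t | t \in s]) (Y (t + h) @^-1` A t)) =
    P (\bigcap_(t in [set t | t \in s]) (Y t @^-1` A t)).

Definition ev_between {T} {R : realType} (X : T -> R) (u1 u2 : \bar R) : set T :=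
  [set w | (u1 < (X w)%:E)%E /\ ((X w)%:E <= u2)%E].

Definition tma_rhs {T} {R : realType} (q d : nat) (r mu1 mu2 : R)
  (phi psi : nat -> R) (e y : int -> T -> R) (n : int) (w : T) : R :=
  if y (n - d%:Z) w <= r
  then mu1 + e n w + \sum_(1 <= i < q.+1) phi i * e (n - i%:Z) w
  else mu2 + e n w + \sum_(1 <= i < q.+1) psi i * e (n - i%:Z) w.

(* Main.v *)
Require Import Defs.
From HB Require Import structures.
From mathcomp Require Import all_boot all_order all_algebra.
From mathcomp Require Import all_classical all_reals all_analysis.
From mathcomp Require Import measurable_realfun measurable_fun_approximation.
Import Order.TTheory GRing.Theory Num.Theory numFieldNormedType.Exports.
Local Open Scope classical_set_scope.
Local Open Scope ring_scope.
Set Implicit Arguments. Unset Strict Implicit. Unset Printing Implicit Defensive.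
From mathcomp Require Import zify ring lra.
Section Indep.
Context {R : realType} {dT : measure_display} {T : measurableType dT}
  (P : probability T R) (e : int -> T -> R).
Hypothesis he : forall n, measurable_fun setT (e n).
Hypothesis hind : mutually_independent P e.

Definition rect (I : seq int) (A : int -> set R) : set T :=
  \bigcap_(i in [set i | i \in I]) (e i @^-1` A i).

Definition GI (I : seq int) : set (set T) :=
  [set X | exists2 A : int -> set R, (forall i, measurable (A i)) & X = rect I A].

Lemma rect_nil A : rect [::] A = setT.
Proof. by apply/seteqP; split => w //= _ i; rewrite in_nil. Qed.

Lemma rect_cons i I A : rect (i :: I) A = e i @^-1` A i `&` rect I A.
Proof.
apply/seteqP; split => w /=.
  move=> h; split; first by apply: h; rewrite /= mem_head.
  by move=> j /= jI; apply: h; rewrite /= in_cons jI orbT.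
move=> [h1 h2] j /=; rewrite in_cons => /orP[/eqP->//|jI]; exact: h2.
Qed.

Lemma rect_cat I J A : rect (I ++ J) A = rect I A `&` rect J A.
Proof.
elim: I => [|i I IH]; first by rewrite rect_nil setTI.
by rewrite cat_cons !rect_cons IH setIA.
Qed.

Lemma rect_ext I A B : (forall i, i \in I -> A i = B i) -> rect I A = rect I B.
Proof.
elim: I => [|i I IH] h; first by rewrite !rect_nil.
rewrite !rect_cons h ?mem_head// IH// => j jI; apply: h; by rewrite in_cons jI orbT.
Qed.

Lemma rectI I A B : rect I A `&` rect I B = rect I (fun i => A i `&` B i).
Proof.
elim: I => [|i I IH]; first by rewrite !rect_nil setTI.
rewrite !rect_cons -IH; apply/seteqP; split => w /=; tauto.
Qed.

Lemma rect_meas I A : (forall i, measurable (A i)) -> measurable (rect I A).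
Proof.
move=> mA; elim: I => [|i I IH]; first by rewrite rect_nil.
rewrite rect_cons; apply: measurableI => //.
by rewrite -(setTI (_ @^-1` _)); apply: he.
Qed.

Lemma GI_meas I : GI I `<=` measurable.
Proof. by move=> X [A mA ->]; exact: rect_meas. Qed.

Lemma GI_setI I : setI_closed (GI I).
Proof.
move=> X Y [A mA ->] [B mB ->]; exists (fun i => A i `&` B i); last exact: rectI.
by move=> i; exact: measurableI.
Qed.

Lemma sGI_meas I : <<s GI I >> `<=` measurable.
Proof. apply: smallest_sub; [exact: sigma_algebra_measurable | exact: GI_meas]. Qed.

Lemma indep_rect I J A B : uniq (I ++ J) ->
  (forall i, measurable (A i)) -> (forall i, measurable (B i)) ->
  P (rect I A `&` rect J B) = (P (rect I A) * P (rect J B))%E.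
Proof.
move=> u mA mB.
pose C i := if i \in I then A i else B i.
have mC i : measurable (C i) by rewrite /C; case: ifP.
have eA : rect I A = rect I C by apply: rect_ext => i iI; rewrite /C iI.
have eB : rect J B = rect J C.
  apply: rect_ext => i iJ; rewrite /C; case: ifP => // iI.
  by move: u; rewrite cat_uniq => /and3P[_ /hasP h _]; exfalso; apply: h; exists i.
move: (u); rewrite cat_uniq => /and3P[uI _ uJ].
by rewrite eA eB -rect_cat /rect hind// big_cat/= -!hind.
Qed.

Lemma fin_prob (X : set T) : measurable X -> P X = (fine (P X))%:E.
Proof. by move=> mX; rewrite fineK// fin_num_measure. Qed.

Lemma fine_prob_ge0 (X : set T) : (0 <= fine (P X))%R.
Proof. by apply: fine_ge0; exact: measure_ge0. Qed.

Lemma sgen_eq I : <<s [set: T], [set X | GI I X /\ X `<=` setT] >> = <<s GI I >>.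
Proof.
congr (<<s _, _ >>); apply/seteqP; split => X /=; first by case.
by move=> h; split.
Qed.

Lemma extend_indep I (Y : set T) : measurable Y ->
  (forall X, GI I X -> P (X `&` Y) = (P X * P Y)%E) ->
  forall X, <<s GI I >> X -> P (X `&` Y) = (P X * P Y)%E.
Proof.
move=> mY h X.
pose m1 := mrestr P mY.
pose m2 := mscale (NngNum (fine_prob_ge0 Y)) P.
have key : forall X, <<s [set: T], [set X | GI I X /\ X `<=` setT] >> X -> m1 X = m2 X.
  apply: (g_sigma_algebra_measure_unique_trace (GI I) setT) => //.
  - by move=> Z [GZ _]; exact: (GI_meas GZ).
  - move=> Z1 Z2 [G1 _] [G2 _]; split => //; exact: GI_setI.
  - change (P (setT `&` Y) = (fine (P Y))%:E * P setT)%E.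
    by rewrite setTI probability_setT mule1 -fin_prob.
  - move=> Z [GZ _]; change (P (Z `&` Y) = (fine (P Y))%:E * P Z)%E.
    by rewrite h// muleC -fin_prob.
  - change (P (setT `&` Y) < +oo)%E.
    by rewrite setTI fin_prob// ltry.
rewrite -sgen_eq => sX; have := key X sX.
change (P (X `&` Y) = (fine (P Y))%:E * P X -> P (X `&` Y) = P X * P Y)%E.
by rewrite muleC -fin_prob.
Qed.

Lemma indep_sigma I J X Y : uniq (I ++ J) ->
  <<s GI I >> X -> <<s GI J >> Y -> P (X `&` Y) = (P X * P Y)%E.
Proof.
move=> u sX sY.
have mX := sGI_meas sX.
have step1 : forall Y, GI J Y -> P (X `&` Y) = (P X * P Y)%E.
  move=> Y' [B mB ->]; apply: (@extend_indep I (rect J B) (rect_meas J mB)) => // Z [A mA ->].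
  exact: indep_rect.
have := @extend_indep J X mX.
have h2 : forall Z, GI J Z -> P (Z `&` X) = (P Z * P X)%E.
  by move=> Z GZ; rewrite setIC step1// muleC.
by move=> /(_ h2 Y sY); rewrite setIC muleC.
Qed.

End Indep.

Section Meas.
Context {R : realType} {dT : measure_display} {T : measurableType dT}
  (e : int -> T -> R).
Hypothesis he : forall n, measurable_fun setT (e n).

Local Notation SI I := (g_sigma_algebraType (GI e I)).

Lemma e_measS I i : i \in I -> measurable_fun (setT : set (SI I)) (e i : SI I -> R).
Proof.
move=> iI _ B mB; rewrite setTI; apply: sub_sigma_algebra.
exists (fun j => if j == i then B else setT).
  by move=> j; case: ifP.
apply/seteqP; split => w /=.
  move=> Bw j /= jI; case: ifP => // /eqP ->; exact: Bw.
by move=> h; have := h i iI; rewrite eqxx.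
Qed.

Lemma rect_measS I J A : {subset J <= I} -> (forall i, measurable (A i)) ->
  measurable (rect e J A : set (SI I)).
Proof.
move=> sJ mA; elim: J sJ => [|j J IH] sJ; first by rewrite rect_nil; exact: measurableT.
rewrite rect_cons; apply: measurableI.
  rewrite -(setTI (_ @^-1` _)); apply: e_measS => //; apply: sJ; exact: mem_head.
by apply: IH => x xJ; apply: sJ; rewrite in_cons xJ orbT.
Qed.

Definition range (lo : int) (n : nat) : seq int := [seq lo + i%:Z | i <- iota 0 n].

Lemma mem_range lo n x : (x \in range lo n) = (lo <= x < lo + n%:Z).
Proof.
apply/mapP/idP.
  by move=> [i]; rewrite mem_iota => /andP[_ ?] ->; lia.
move=> h; exists `|x - lo|%N; last by lia.
rewrite mem_iota; lia.
Qed.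

Lemma range_uniq lo n : uniq (range lo n).
Proof. rewrite map_inj_uniq ?iota_uniq// => i j /= h; lia. Qed.

Lemma range_disj_uniq lo1 n1 lo2 n2 : lo1 + n1%:Z <= lo2 ->
  uniq (range lo1 n1 ++ range lo2 n2).
Proof.
move=> h; rewrite cat_uniq !range_uniq /= andbT; apply/hasPn => x.
rewrite !mem_range => ?; apply/negP; lia.
Qed.

End Meas.

Section Dyn.
Context {R : realType} {dT : measure_display} {T : measurableType dT}
  (e : int -> T -> R).
Hypothesis he : forall n, measurable_fun setT (e n).
Variables (q d : nat) (r mu1 mu2 : R) (phi psi : nat -> R).

Local Notation SI I := (g_sigma_algebraType (GI e I)).

Definition g1 (n : int) (w : T) : R :=
  mu1 + e n w + \sum_(1 <= i < q.+1) phi i * e (n - i%:Z) w.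
Definition g2 (n : int) (w : T) : R :=
  mu2 + e n w + \sum_(1 <= i < q.+1) psi i * e (n - i%:Z) w.

Fixpoint val (t : int) (m : nat) (w : T) : R :=
  match m with
  | 0 => r
  | m'.+1 => if val t m' w <= r then g1 (t + (m'.+1 * d)%N%:Z) w
             else g2 (t + (m'.+1 * d)%N%:Z) w
  end.

Definition cc : R := r - `|mu1| - `|mu2| - \sum_(1 <= i < q.+1) (`|phi i| + `|psi i|).

Definition Aset (t j : int) : set R :=
  if j == t then [set` `]-oo, cc]] else [set` `[-1, 1]].

Lemma Aset_meas t j : measurable (Aset t j).
Proof. by rewrite /Aset; case: ifP. Qed.

Definition window (t : int) := range (t - q%:Z) q.+1.

Definition Rst (t : int) : set T := rect e (window t) (Aset t).

Definition LL := q.+1.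
Definition sj (k : int) (j : nat) : int := k - (j * LL * d)%N%:Z.

Fixpoint Wrec (k : int) (j : nat) (w : T) : R :=
  match j with
  | 0 => 0
  | j'.+1 => if w \in Rst (sj k j'.+1) then val (sj k j'.+1) (j'.+1 * LL) w
             else Wrec k j' w
  end.

Fixpoint NR (k : int) (j : nat) : set T :=
  match j with
  | 0 => setT
  | j'.+1 => NR k j' `&` ~` Rst (sj k j'.+1)
  end.

Lemma msum_in {dU : measure_display} (U : measurableType dU) (s : seq nat) (h : nat -> U -> R) :
  (forall i, i \in s -> measurable_fun setT (h i)) ->
  measurable_fun setT (fun x => \sum_(i <- s) h i x).
Proof.
elim: s => [|i s IH] hs.
  by under eq_fun do rewrite big_nil; exact: measurable_cst.
under eq_fun do rewrite big_cons.
apply: measurable_funD; first by apply: hs; rewrite mem_head.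
by apply: IH => j js; apply: hs; rewrite in_cons js orbT.
Qed.

Lemma mem_setT_meas {dU : measure_display} (U : measurableType dU) (A : set U) : measurable A ->
  measurable_fun setT (fun w => w \in A).
Proof.
move=> mA; apply: (measurable_fun_bool true) => //.
rewrite setTI (_ : _ @^-1` _ = A)//; apply/seteqP; split => w /=.
  by move=> /set_mem.
by move=> Aw; apply/mem_set.
Qed.

Section MeasS.
Variables (I : seq int) (lo hi : int).
Hypothesis inI : forall j, lo <= j <= hi -> j \in I.

Lemma e_mS j : lo <= j <= hi -> measurable_fun (setT : set (SI I)) (e j : SI I -> R).
Proof. by move=> h; apply: e_measS; apply: inI. Qed.

Lemma g1_mS n : lo <= n - q%:Z -> n <= hi ->
  measurable_fun (setT : set (SI I)) (g1 n : SI I -> R).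
Proof.
move=> h1 h2; rewrite /g1; apply: measurable_funD; first apply: measurable_funD.
- exact: measurable_cst.
- by apply: e_mS; lia.
apply: (@msum_in _ (SI I) _ (fun i (w : SI I) => phi i * e (n - i%:Z) w)) => i.
rewrite mem_index_iota => hi'.
apply: measurable_funM; first exact: measurable_cst.
by apply: e_mS; lia.
Qed.

Lemma g2_mS n : lo <= n - q%:Z -> n <= hi ->
  measurable_fun (setT : set (SI I)) (g2 n : SI I -> R).
Proof.
move=> h1 h2; rewrite /g2; apply: measurable_funD; first apply: measurable_funD.
- exact: measurable_cst.
- by apply: e_mS; lia.
apply: (@msum_in _ (SI I) _ (fun i (w : SI I) => psi i * e (n - i%:Z) w)) => i.
rewrite mem_index_iota => hi'.
apply: measurable_funM; first exact: measurable_cst.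
by apply: e_mS; lia.
Qed.

Lemma val_mS t m : lo <= t - q%:Z -> t + (m * d)%N%:Z <= hi ->
  measurable_fun (setT : set (SI I)) (val t m : SI I -> R).
Proof.
move=> h1; elim: m => [|m IH] h2 /=; first exact: measurable_cst.
apply: measurable_fun_ifT.
- apply: measurable_fun_ler; last exact: measurable_cst.
  by apply: IH; lia.
- by apply: g1_mS; lia.
- by apply: g2_mS; lia.
Qed.

Lemma Rst_mS t : lo <= t - q%:Z -> t <= hi -> measurable (Rst t : set (SI I)).
Proof.
move=> h1 h2; apply: rect_measS => //; last exact: Aset_meas.
move=> j; rewrite mem_range => hj; apply: inI; lia.
Qed.

Lemma Wrec_mS k N : lo <= sj k N - q%:Z -> k <= hi ->
  measurable_fun (setT : set (SI I)) (Wrec k N : SI I -> R).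
Proof.
rewrite /sj /LL => h1 h2; elim: N h1 => [|N IH] h1 /=; first exact: measurable_cst.
apply: measurable_fun_ifT.
- apply: (@mem_setT_meas _ (SI I) (Rst (sj k N.+1))); apply: Rst_mS; rewrite /sj /LL; lia.
- by apply: (@val_mS (sj k N.+1) (N.+1 * LL)); rewrite /sj /LL; lia.
- by apply: IH; rewrite /sj /LL; lia.
Qed.

Lemma NR_mS k N : lo <= sj k N - q%:Z -> k <= hi -> measurable (NR k N : set (SI I)).
Proof.
rewrite /sj /LL => h1 h2; elim: N h1 => [|N IH] h1 /=; first exact: measurableT.
apply: measurableI; first by apply: IH; lia.
by apply: measurableC; apply: Rst_mS; rewrite /sj /LL; lia.
Qed.

End MeasS.

Lemma ev_mS {dU : measure_display} (U : measurableType dU) (W : U -> R) u1 u2 :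
  measurable_fun setT W -> measurable (ev_between W u1 u2).
Proof.
move=> mW.
have : measurable (setT `&` (EFin \o W) @^-1` [set` Interval (BRight u1) (BRight u2)]).
  by apply: (proj2 (measurable_EFinP _ _) mW) => //; exact: emeasurable_itv.
rewrite setTI (_ : _ @^-1` _ = ev_between W u1 u2)//.
apply/seteqP; split => w /=; rewrite /ev_between /=.
  by rewrite in_itv /= => /andP[].
by move=> [h1 h2]; rewrite in_itv /= h1 h2.
Qed.

End Dyn.

Section Dens.
Context {R : realType} (f : R -> R).
Hypothesis hcont : continuous f.
Hypothesis hpos : forall x, 0 < f x.

Lemma int_pos (a b : R) : a < b ->
  (0 < \int[lebesgue_measure]_(x in [set` `[a, b]]) (f x)%:E)%E.
Proof.
move=> ab.
pose x0 := (a + b) / 2.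
have fx0 := hpos x0.
have lt2 : f x0 / 2 < f x0 by rewrite ltr_pdivrMr// ltr_pMr// ltr1n.
have hc : f x @[x --> x0] --> f x0 by apply: hcont.
have := cvgr_gt (f x0) hc (f x0 / 2) lt2.
move=> hn; have [dl /= dl0 Hb] := proj1 (nbhs_ballP _ _) (hn _).
pose h := Num.min (dl / 2) ((b - a) / 2).
have h0 : 0 < h by rewrite lt_min; apply/andP; split; apply: divr_gt0 => //; rewrite subr_gt0.
have hdl : h < dl by rewrite gt_min ltr_pdivrMr// ltr_pMr// ltr1n.
have hab : h <= (b - a) / 2 by rewrite ge_min lexx orbT.
have mf : measurable_fun setT f := continuous_measurable_fun hcont.
have mfE : measurable_fun setT (fun x => (f x)%:E) by apply/measurable_EFinP.
have sub : [set` `[x0 - h, x0 + h]] `<=` [set` `[a, b]].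
  move=> x /=; rewrite !in_itv /= => /andP[h1 h2].
  by apply/andP; split; rewrite /x0 in h1 h2; lra.
have mJ : measurable [set` `[x0 - h, x0 + h]] by [].
have mI : measurable [set` `[a, b]] by [].
have le1 := @ge0_subset_integral _ _ _ lebesgue_measure _ _ mJ mI (fun x => (f x)%:E)
  (measurable_funS measurableT (@subsetT _ _) mfE) (fun x _ => ltW (hpos x)) sub.
apply: (lt_le_trans _ le1).
have hle : forall x, [set` `[x0 - h, x0 + h]] x -> ((cst (f x0 / 2)%:E) x <= (f x)%:E)%E.
  move=> x /=; rewrite in_itv /= => /andP[h1 h2]; rewrite lee_fin ltW//.
  apply: Hb => /=; rewrite -ball_normE /ball /=.
  apply: le_lt_trans hdl; rewrite ler_norml; apply/andP; split; lra.
have hc0 : forall x, [set` `[x0 - h, x0 + h]] x -> (0 <= (cst (f x0 / 2)%:E) x)%E.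
  by move=> x _; rewrite lee_fin ltW// divr_gt0.
have le2 := @ge0_le_integral _ _ _ lebesgue_measure _ mJ (cst (f x0 / 2)%:E) (fun x => (f x)%:E)
  hc0 (measurable_cst _) (measurable_funS measurableT (@subsetT _ _) mfE) hle.
apply: (lt_le_trans _ le2).
rewrite integral_cst//.
rewrite [X in (_ * X)%E](lebesgue_measure_itv `[x0 - h, x0 + h]) /= lte_fin ifT; last by lra.
by rewrite mule_gt0// lte_fin ?divr_gt0//; lra.
Qed.
End Dens.

Section Coal.
Context {R : realType} {dT : measure_display} {T : measurableType dT}
  (e : int -> T -> R).
Variables (q d : nat) (r mu1 mu2 : R) (phi psi : nat -> R) (y : int -> T -> R).

Definition Good (w : T) := forall n, y n w = tma_rhs q d r mu1 mu2 phi psi e y n w.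

Lemma sum_bound (ph : nat -> R) (t : int) (w : T) :
  (forall i, (1 <= i <= q)%N -> `|e (t - i%:Z) w| <= 1) ->
  \sum_(1 <= i < q.+1) ph i * e (t - i%:Z) w <= \sum_(1 <= i < q.+1) `|ph i|.
Proof.
move=> h; apply: ler_sum_nat => i /andP[i1 iq].
apply: (le_trans (ler_norm _)); rewrite normrM.
by rewrite -[leRHS]mulr1 ler_wpM2l// h// i1 -ltnS.
Qed.

Lemma Rst_le w t : Rst e q r mu1 mu2 phi psi t w ->
  g1 e q mu1 phi t w <= r /\ g2 e q mu2 psi t w <= r.
Proof.
rewrite /Rst /rect => h.
have ht : e t w <= cc q r mu1 mu2 phi psi.
  have := h t; rewrite /Aset eqxx /= in_itv /=; apply.
  by rewrite /window mem_range; lia.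
have hi : forall i, (1 <= i <= q)%N -> `|e (t - i%:Z) w| <= 1.
  move=> i hi; have := h (t - i%:Z); rewrite /Aset.
  have -> : (t - i%:Z == t) = false by apply/negbTE; lia.
  rewrite /= in_itv /= => hh; rewrite ler_norml; apply: hh.
  by rewrite /window mem_range; lia.
have s1 := sum_bound phi hi.
have s2 := sum_bound psi hi.
have sD : \sum_(1 <= i < q.+1) (`|phi i| + `|psi i|) =
   \sum_(1 <= i < q.+1) `|phi i| + \sum_(1 <= i < q.+1) `|psi i| by rewrite big_split.
have a1 : 0 <= \sum_(1 <= i < q.+1) `|phi i| by apply: sumr_ge0.
have a2 : 0 <= \sum_(1 <= i < q.+1) `|psi i| by apply: sumr_ge0.
have m1 := ler_norm mu1. have m2 := ler_norm mu2.
have n1 := normr_ge0 mu1. have n2 := normr_ge0 mu2.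
move: ht; rewrite /cc sD /g1 /g2 => ht.
split; lra.
Qed.

Lemma val_le_eq t w m : Good w -> y t w <= r ->
  (y (t + (m * d)%N%:Z) w <= r) = (val e q d r mu1 mu2 phi psi t m w <= r).
Proof.
move=> G yt; elim: m => [|m IH]; first by rewrite mul0n addr0 yt lexx.
rewrite G /tma_rhs /=.
have -> : t + (m.+1 * d)%N%:Z - d%:Z = t + (m * d)%N%:Z by rewrite mulSn; lia.
by rewrite IH.
Qed.

Lemma val_eq t w m : Good w -> y t w <= r -> (0 < m)%N ->
  y (t + (m * d)%N%:Z) w = val e q d r mu1 mu2 phi psi t m w.
Proof.
move=> G yt; case: m => [//|m] _.
rewrite G /tma_rhs /=.
have -> : t + (m.+1 * d)%N%:Z - d%:Z = t + (m * d)%N%:Z by rewrite mulSn; lia.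
by rewrite val_le_eq.
Qed.

Lemma WrecS k N w : Wrec e q d r mu1 mu2 phi psi k N.+1 w =
  if w \in Rst e q r mu1 mu2 phi psi (sj q d k N.+1)
  then val e q d r mu1 mu2 phi psi (sj q d k N.+1) (N.+1 * LL q) w
  else Wrec e q d r mu1 mu2 phi psi k N w.
Proof. by []. Qed.

Lemma NRS k N : NR e q d r mu1 mu2 phi psi k N.+1 =
  NR e q d r mu1 mu2 phi psi k N `&` ~` Rst e q r mu1 mu2 phi psi (sj q d k N.+1).
Proof. by []. Qed.

Lemma Wrec_ok k N w : Good w -> ~ NR e q d r mu1 mu2 phi psi k N w ->
  y k w = Wrec e q d r mu1 mu2 phi psi k N w.
Proof.
move=> G; elim: N => [|N IH]; first by move=> h; exfalso; apply: h.
rewrite WrecS NRS; case: ifPn => [/set_mem hR _ | /negP hR hN].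
  have yle : y (sj q d k N.+1) w <= r.
    rewrite G /tma_rhs; have [h1 h2] := Rst_le hR; by case: ifP.
  have hm : (0 < N.+1 * LL q)%N by rewrite muln_gt0.
  rewrite -(val_eq G yle hm).
  congr (y _ w); rewrite /sj; lia.
apply: IH => hN'; apply: hN; split => //.
by move=> hr; apply: hR; apply/mem_set.
Qed.

End Coal.

Section Prob.
Context {R : realType} {dT : measure_display} {T : measurableType dT}
  (P : probability T R) (e : int -> T -> R) (f : R -> R).
Hypothesis he : forall n, measurable_fun setT (e n).
Hypothesis hind : mutually_independent P e.
Hypothesis hid : identically_distributed P e.
Hypothesis hdens : has_density P (e 0) f.
Hypothesis hcont : continuous f.
Hypothesis hpos : forall x, 0 < f x.
Variables (q d : nat) (r mu1 mu2 : R) (phi psi : nat -> R).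
Hypothesis hd : (1 <= d)%N.

Lemma pre_meas n (A : set R) : measurable A -> measurable (e n @^-1` A).
Proof. by move=> mA; rewrite -(setTI (_ @^-1` _)); apply: he. Qed.

Lemma pos_itv a b : a < b -> 0 < fine (P (e 0 @^-1` [set` `[a, b]])).
Proof.
move=> ab; have h := int_pos hcont hpos ab.
rewrite -hdens in h; last exact: measurable_itv.
apply: fine_gt0; rewrite h /= (fin_prob P (pre_meas 0 (measurable_itv _))) ltry.
by [].
Qed.

Definition pa := fine (P (e 0 @^-1` [set` `]-oo, cc q r mu1 mu2 phi psi]])).
Definition pb := fine (P (e 0 @^-1` [set` `[-1, 1]])).
Definition pp := pb ^+ q * pa.

Lemma fine_mono (A B : set R) : measurable A -> measurable B -> A `<=` B ->
  fine (P (e 0 @^-1` A)) <= fine (P (e 0 @^-1` B)).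
Proof.
move=> mA mB AB; apply: fine_le; rewrite ?fin_num_measure//; try exact: pre_meas.
apply: le_measure; rewrite ?inE; try exact: pre_meas.
by move=> w /= /AB.
Qed.

Lemma pa_pos : 0 < pa.
Proof.
pose c := cc q r mu1 mu2 phi psi.
have c1 : c - 1 < c by lra.
have h := @pos_itv (c - 1) c c1.
apply: (lt_le_trans h); apply: fine_mono => //.
by move=> x /=; rewrite !in_itv /= => /andP[].
Qed.

Lemma pb_pos : 0 < pb.
Proof. exact: pos_itv. Qed.

Lemma pp_pos : 0 < pp.
Proof. by rewrite /pp mulr_gt0// ?exprn_gt0// ?pb_pos// pa_pos. Qed.

Lemma P_Rst t : P (Rst e q r mu1 mu2 phi psi t) = pp%:E.
Proof.
rewrite /Rst /rect hind; last 2 first.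
- exact: range_uniq.
- exact: Aset_meas.
rewrite /window /range big_map.
have -> : iota 0 q.+1 = index_iota 0 q.+1 by rewrite /index_iota subn0.
rewrite big_nat_recr //=.
have -> : t - q%:Z + q%:Z = t by lia.
rewrite {2}/Aset eqxx hid; last exact: measurable_itv.
rewrite (fin_prob P (pre_meas 0 (measurable_itv _))) -/pa.
rewrite big_nat_cond (eq_bigr (fun _ => pb%:E)); last first.
  move=> i; rewrite andbT => /andP[_ iq].
  have -> : Aset q r mu1 mu2 phi psi t (t - q%:Z + i%:Z) = [set` `[-1, 1]].
    rewrite /Aset ifF //; apply/negbTE; lia.
  rewrite hid; last exact: measurable_itv.
  by rewrite (fin_prob P (pre_meas 0 (measurable_itv _))).
rewrite -big_nat_cond prodEFin prodr_const_nat subn0 /pp.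
by [].
Qed.

Lemma in_rangeI lo n hi : hi < lo + n%:Z -> forall j, lo <= j <= hi -> j \in range lo n.
Proof. by move=> h j hj; rewrite mem_range; lia. Qed.

Definition blk k N := range (sj q d k N - q%:Z) (N * LL q * d + q).+1.

Lemma blk_in k N : forall j, sj q d k N - q%:Z <= j <= k -> j \in blk k N.
Proof. by apply: in_rangeI; rewrite /sj; lia. Qed.

Lemma P_NR k N : P (NR e q d r mu1 mu2 phi psi k N) = ((1 - pp) ^+ N)%:E.
Proof.
elim: N => [|N IH]; first by rewrite /= probability_setT expr0.
have hm1 : (N.+1 * LL q * d = N * LL q * d + LL q * d)%N by rewrite mulSn mulnDl addnC.
have hm2 : (q.+1 <= LL q * d)%N by rewrite /LL leq_pmulr.
rewrite NRS setIC (@indep_sigma _ _ _ P e he hind (window q (sj q d k N.+1)) (blk k N)).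
- rewrite probability_setC; last exact: rect_meas he _ _ (fun _ => Aset_meas _ _ _ _ _ _ _ _).
  by rewrite IH P_Rst -EFinB -EFinM exprS.
- apply: range_disj_uniq; rewrite /sj; lia.
- apply: (@measurableC _ (g_sigma_algebraType (GI e _))).
  apply: (@Rst_mS _ _ _ e q r mu1 mu2 phi psi _ (sj q d k N.+1 - q%:Z) (sj q d k N.+1)).
  + by apply: in_rangeI; lia.
  + by [].
  + by [].
- apply: (@NR_mS _ _ _ e q d r mu1 mu2 phi psi _ (sj q d k N - q%:Z) k); last by [].
  + exact: blk_in.
  + by [].
Qed.

End Prob.

Section Helpers.
Context {R : realType} {dT : measure_display} {T : measurableType dT}
  (P : probability T R).

Lemma split_fine (X S : set T) : measurable X -> measurable S ->
  fine (P X) = fine (P (X `&` S)) + fine (P (X `&` ~` S)).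
Proof.
move=> mX mS.
have mXS : measurable (X `&` S) by exact: measurableI.
have mXC : measurable (X `&` ~` S) by apply: measurableI => //; exact: measurableC.
rewrite -fineD ?fin_num_measure//.
rewrite -measureU//; first by rewrite -setIUr setUv setIT.
by apply/seteqP; split => w // [[_ a] [_ b]].
Qed.

Lemma close (X X' S : set T) : measurable X -> measurable X' -> measurable S ->
  X `&` S = X' `&` S -> `|fine (P X) - fine (P X')| <= fine (P (~` S)).
Proof.
move=> mX mX' mS E.
have mC : measurable (~` S) by exact: measurableC.
rewrite (split_fine mX mS) (split_fine mX' mS) E.
have b1 : fine (P (X `&` ~` S)) <= fine (P (~` S)).
  have mXC : measurable (X `&` ~` S) by exact: measurableI.
  apply: fine_le; rewrite ?fin_num_measure//.
  exact: (le_measure P (mem_set mXC) (mem_set mC) (@subIsetr _ X (~` S))).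
have b2 : fine (P (X' `&` ~` S)) <= fine (P (~` S)).
  have mXC : measurable (X' `&` ~` S) by exact: measurableI.
  apply: fine_le; rewrite ?fin_num_measure//.
  exact: (le_measure P (mem_set mXC) (mem_set mC) (@subIsetr _ X' (~` S))).
have c1 := fine_prob_ge0 P (X `&` ~` S).
have c2 := fine_prob_ge0 P (X' `&` ~` S).
rewrite ler_norml; apply/andP; split; lra.
Qed.

Lemma arith3 (a b c a' b' c' eps : R) : 0 <= a <= 1 -> 0 <= b' <= 1 ->
  `|c - c'| <= eps -> `|a - a'| <= eps -> `|b - b'| <= eps -> c' = a' * b' ->
  `|c - a * b| <= 3 * eps.
Proof.
move=> /andP[a0 a1] /andP[b0 b1].
rewrite !ler_norml => /andP[h1 h2] /andP[h3 h4] /andP[h5 h6] E; subst c'.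
apply/andP; split; nra.
Qed.

Lemma bern (x : R) n : 0 <= x <= 1 -> 1 - n%:R * x <= (1 - x) ^+ n.
Proof.
move=> /andP[x0 x1]; elim: n => [|n IH]; first by rewrite mul0r subr0 expr0.
rewrite exprS -natr1.
have h : 0 <= 1 - x by lra.
have n0 : 0 <= n%:R :> R by [].
have nx := mulr_ge0 n0 (mulr_ge0 x0 x0).
have := ler_wpM2l h IH; nra.
Qed.

End Helpers.

Lemma final_bound {R : realType} (p : R) (m N k : nat) : 0 < p <= 1 -> (2 <= m)%N ->
  (N * m <= k)%N -> (k < N.+1 * m)%N ->
  6 * (1 - p) ^+ N <= 6 / (1 - p / m%:R) ^+ m * (1 - p / m%:R) ^+ k.
Proof.
move=> /andP[p0 p1] m2 h1 h2.
have m0 : 0 < m%:R :> R by rewrite ltr0n; lia.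
have m1 : 1 <= m%:R :> R by rewrite ler1n; lia.
have x0 : 0 <= p / m%:R by rewrite divr_ge0// ltW.
have x1 : p / m%:R <= 1 by rewrite ler_pdivrMr// mul1r; lra.
set rho := 1 - p / m%:R.
have r0 : 0 <= rho by rewrite /rho; lra.
have r1 : rho <= 1 by rewrite /rho; lra.
have r0' : 0 < rho.
  rewrite /rho subr_gt0 ltr_pdivrMr// mul1r; apply: (le_lt_trans p1).
  by rewrite ltr1n; lia.
have hb : 1 - p <= rho ^+ m.
  have := @bern R (p / m%:R) m; rewrite mulrCA mulfV ?gt_eqF// mulr1; apply.
  by rewrite x0 x1.
have q0 : 0 <= 1 - p by lra.
have e1 : (1 - p) ^+ N <= rho ^+ (m * N).
  rewrite exprM; apply: lerXn2r; rewrite ?nnegrE//; exact: le_trans hb.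
have e2 : rho ^+ (N.+1 * m) <= rho ^+ k.
  by apply: ler_wiXn2l => //; apply: ltnW.
have rm : 0 < rho ^+ m by apply: exprn_gt0.
have e3 : rho ^+ (N.+1 * m) = rho ^+ (m * N) * rho ^+ m.
  by rewrite -exprD mulSn addnC mulnC.
rewrite mulrAC ler_pdivlMr// -mulrA ler_pM2l//.
apply: (le_trans (ler_wpM2r (ltW rm) e1)); by rewrite -e3.
Qed.

Section More.
Context {R : realType} {dT : measure_display} {T : measurableType dT}
  (P : probability T R).

Lemma cov_indic (A B : set T) : measurable A -> measurable B ->
  covariance P (\1_A) (\1_B) = (fine (P (A `&` B)) - fine (P A) * fine (P B))%:E.
Proof.
move=> mA mB.
have mAB : measurable (A `&` B) by exact: measurableI.
have LA : (\1_A : T -> R) \in Lfun P 1 by apply/Lfun1_integrable; exact: integrable_indic.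
have LB : (\1_B : T -> R) \in Lfun P 1 by apply/Lfun1_integrable; exact: integrable_indic.
have E : (\1_A * \1_B : T -> R) = \1_(A `&` B) by rewrite indicI.
have LAB : (\1_A * \1_B : T -> R) \in Lfun P 1.
  by rewrite E; apply/Lfun1_integrable; exact: integrable_indic.
rewrite covarianceE// E !expectation_indic//.
by rewrite (fin_prob P mA) (fin_prob P mB) (fin_prob P mAB) -EFinM -EFinB.
Qed.

Lemma ev_eq_on (f g : T -> R) (S : set T) u1 u2 :
  (forall w, S w -> f w = g w) ->
  ev_between f u1 u2 `&` S = ev_between g u1 u2 `&` S.
Proof.
move=> h; apply/seteqP; split => w [hw sw]; split => //;
  by move: hw; rewrite /ev_between /= h.
Qed.

End More.

Lemma good_ae {R : realType} {dT : measure_display} {T : measurableType dT}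
  (P : probability T R) (e : int -> T -> R) (q d : nat) (r mu1 mu2 : R)
  (phi psi : nat -> R) (y : int -> T -> R) :
  (forall n : int, {ae P, forall w, y n w = tma_rhs q d r mu1 mu2 phi psi e y n w}) ->
  exists Nn : set T, [/\ measurable Nn, P Nn = 0%E &
    forall w, ~ Nn w -> Good e q d r mu1 mu2 phi psi y w].
Proof.
move=> hy.
pose Q (m : nat) (w : T) := y (Posz m) w = tma_rhs q d r mu1 mu2 phi psi e y (Posz m) w
  /\ y (Negz m) w = tma_rhs q d r mu1 mu2 phi psi e y (Negz m) w.
have H : forall m, \forall w \ae P, Q m w.
  by move=> m; apply: filterI; [exact: hy | exact: hy].
have [Nn [mNn PNn sub]] := ae_foralln H.
exists Nn; split => // w nw.
have hall : forall m, Q m w.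
  case: (pselect (forall m, Q m w)) => // hn; exfalso; exact: nw (sub w hn).
by case=> m; have [h1 h2] := hall m.
Qed.

Lemma fine_le1 {R : realType} {dT : measure_display} {T : measurableType dT}
  (P : probability T R) (X : set T) : measurable X -> fine (P X) <= 1.
Proof.
move=> mX; rewrite -[1]/(fine 1%E); apply: fine_le; rewrite ?fin_num_measure//.
exact: probability_le1.
Qed.

Unset Implicit Arguments.
Set Strict Implicit.

Theorem mainTheorem4 (R : realType) (dT : measure_display) (T : measurableType dT)
  (P : probability T R) (e : int -> T -> R) (f : R -> R)
  (q d : nat) (r mu1 mu2 : R) (phi psi : nat -> R) (y : int -> T -> R) :
  (forall n, measurable_fun setT (e n)) ->
  mutually_independent P e ->
  identically_distributed P e ->
  has_density P (e 0) f ->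
  continuous f ->
  (exists M : R, forall x, `|f x| <= M) ->
  (forall x, 0 < f x) ->
  (1 <= q)%N -> (1 <= d)%N ->
  (forall n, measurable_fun setT (y n)) ->
  (forall n : int, {ae P, forall w, y n w = tma_rhs q d r mu1 mu2 phi psi e y n w}) ->
  strictly_stationary P y ->
  exists rho : R, 0 < rho < 1 /\
    forall u1 u2 v1 v2 : \bar R, (u1 < u2)%E -> (v1 < v2)%E ->
      exists (C : R) (K : nat), forall k : nat, (K <= k)%N ->
        (`| covariance P (\1_(ev_between (y (0:int)%R) u1 u2))
                         (\1_(ev_between (y k%:Z) v1 v2)) |
           <= (C * rho ^+ k)%:E)%E.
Proof.
move=> he hind hid hdens hcont _ hpos hq hd hym hy _.
set p := pp P e q r mu1 mu2 phi psi.
have p0 : 0 < p := pp_pos he hdens hcont hpos q r mu1 mu2 phi psi.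
have p1 : p <= 1.
  have mR : measurable (Rst e q r mu1 mu2 phi psi 0).
    by apply: rect_meas => // j; exact: Aset_meas.
  have := probability_le1 P mR.
  by rewrite (P_Rst he hind hid q r mu1 mu2 phi psi hd 0) lee_fin.
pose m := (2 * LL q * d)%N.
have m2 : (2 <= m)%N.
  by rewrite /m /LL -mulnA; apply: leq_pmulr; rewrite muln_gt0 hd.
have m0 : 0 < m%:R :> R by rewrite ltr0n; lia.
exists (1 - p / m%:R); split.
  apply/andP; split.
    rewrite subr_gt0 ltr_pdivrMr// mul1r; apply: (le_lt_trans p1).
    by rewrite ltr1n; lia.
  by rewrite ltrBlDr ltrDl divr_gt0.
move=> u1 u2 v1 v2 _ _.
exists (6 / (1 - p / m%:R) ^+ m), (2 * q.+1)%N => k hk.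
set N := (k %/ m)%N.
have hN1 : (N * m <= k)%N := leq_trunc_div k m.
have hN2 : (k < N.+1 * m)%N by apply: ltn_ceil; lia.
have hNm : (N * m = N * LL q * d * 2)%N by rewrite /m; ring.
have hNL : (N * LL q * d + q + 1 <= k)%N by lia.
have [Nn [mNn PNn hG]] := good_ae hy.
pose W0 := Wrec e q d r mu1 mu2 phi psi 0 N.
pose Wk := Wrec e q d r mu1 mu2 phi psi k%:Z N.
have mW0 : measurable_fun setT (W0 : g_sigma_algebraType (GI e (blk q d 0 N)) -> R).
  exact: (@Wrec_mS _ _ _ e q d r mu1 mu2 phi psi (blk q d 0 N) (sj q d 0 N - q%:Z) 0
    (@blk_in q d hd 0 N) 0 N (lexx _) (lexx _)).
have mWk : measurable_fun setT (Wk : g_sigma_algebraType (GI e (blk q d k N)) -> R).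
  exact: (@Wrec_mS _ _ _ e q d r mu1 mu2 phi psi (blk q d k N) (sj q d k N - q%:Z) k
    (@blk_in q d hd k N) k N (lexx _) (lexx _)).
pose A := ev_between (y (0:int)%R) u1 u2.
pose B := ev_between (y k%:Z) v1 v2.
pose A' := ev_between W0 u1 u2.
pose B' := ev_between Wk v1 v2.
have sA' : <<s GI e (blk q d 0 N) >> A' := ev_mS u1 u2 mW0.
have sB' : <<s GI e (blk q d k N) >> B' := ev_mS v1 v2 mWk.
have mA' : measurable A' := sGI_meas he sA'.
have mB' : measurable B' := sGI_meas he sB'.
have mA : measurable A := ev_mS u1 u2 (hym 0).
have mB : measurable B := ev_mS v1 v2 (hym k%:Z).
have mNR0 : measurable (NR e q d r mu1 mu2 phi psi 0 N) := sGI_meas he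
  (@NR_mS _ _ _ e q d r mu1 mu2 phi psi (blk q d 0 N) (sj q d 0 N - q%:Z) 0
    (@blk_in q d hd 0 N) 0 N (lexx _) (lexx _)).
have mNRk : measurable (NR e q d r mu1 mu2 phi psi k N) := sGI_meas he
  (@NR_mS _ _ _ e q d r mu1 mu2 phi psi (blk q d k N) (sj q d k N - q%:Z) k
    (@blk_in q d hd k N) k N (lexx _) (lexx _)).
pose S := ~` Nn `&` (~` NR e q d r mu1 mu2 phi psi 0 N `&` ~` NR e q d r mu1 mu2 phi psi k N).
have mS : measurable S.
  by apply: measurableI; [|apply: measurableI]; apply: measurableC.
have hS0 : forall w, S w -> y (0:int)%R w = W0 w.
  by move=> w [h1 [h2 h3]]; apply: Wrec_ok => //; exact: hG.
have hSk : forall w, S w -> y k%:Z w = Wk w.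
  by move=> w [h1 [h2 h3]]; apply: Wrec_ok => //; exact: hG.
have hA : A `&` S = A' `&` S := ev_eq_on u1 u2 hS0.
have hB : B `&` S = B' `&` S := ev_eq_on v1 v2 hSk.
have hAB : (A `&` B) `&` S = (A' `&` B') `&` S.
  by rewrite -[S in LHS]setIid setIACA hA hB setIACA setIid.
have hu : uniq (blk q d 0 N ++ blk q d k N) by apply: range_disj_uniq; rewrite /sj; lia.
have hind' : P (A' `&` B') = (P A' * P B')%E := indep_sigma he hind hu sA' sB'.
have heps : fine (P (~` S)) <= (1 - p) ^+ N + (1 - p) ^+ N.
  have -> : ~` S = Nn `|` (NR e q d r mu1 mu2 phi psi 0 N `|` NR e q d r mu1 mu2 phi psi k N).
    by rewrite /S !setCI !setCK.
  have hle : (P (Nn `|` (NR e q d r mu1 mu2 phi psi 0 N `|` NR e q d r mu1 mu2 phi psi k N))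
     <= ((1 - p) ^+ N + (1 - p) ^+ N)%:E)%E.
    apply: (le_trans (measureU2 _ _ _)) => //; first exact: measurableU.

    rewrite [X in (X + _)%E](_ : _ = 0%E); last exact: PNn.
    rewrite add0e; apply: (le_trans (measureU2 _ _ _)) => //.
    rewrite [X in (X + _)%E](_ : _ = ((1 - p) ^+ N)%:E); last first.
      exact: (P_NR he hind hid q r mu1 mu2 phi psi hd 0 N).
    rewrite [X in (_ + X)%E](_ : _ = ((1 - p) ^+ N)%:E); last first.
      exact: (P_NR he hind hid q r mu1 mu2 phi psi hd k N).
    by rewrite -EFinD.
  rewrite -[X in _ <= X]/(fine ((1 - p) ^+ N + (1 - p) ^+ N)%:E).
  apply: fine_le => //; rewrite fin_num_measure//.
  by apply: measurableU => //; exact: measurableU.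
rewrite (cov_indic P mA mB) abse_EFin lee_fin.
have mAB : measurable (A `&` B) := measurableI _ _ mA mB.
have mAB' : measurable (A' `&` B') := measurableI _ _ mA' mB'.
have hc' : fine (P (A' `&` B')) = fine (P A') * fine (P B').
  by rewrite hind' (fin_prob P mA') (fin_prob P mB') -EFinM.
have ab1 : 0 <= fine (P A) <= 1 by rewrite fine_prob_ge0 fine_le1.
have bb1 : 0 <= fine (P B') <= 1 by rewrite fine_prob_ge0 fine_le1.
have h3 := arith3 ab1 bb1 (close P mAB mAB' mS hAB) (close P mA mA' mS hA)
  (close P mB mB' mS hB) hc'.
have p01 : 0 < p <= 1 by rewrite p0 p1.
have fb := final_bound p01 m2 hN1 hN2.
apply: (le_trans h3); lra.
Qed.
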